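(* Let $g\ge1$, $n=g+1$, $k\in\{1,\dots,g\}$, $\kappa_1,\dots,\kappa_n\in\mathbb C$ pairwise distinct, $\beta_1,\dots,\beta_g\in\mathbb C^*$, $\beta_0:=1$, $I_k=\{1,\dots,k\}$, and let $A$ be the $k\times n$ matrix with $A_{ij}=\delta_{ij}$ for $j\le k$ and $A_{ij}=\frac{\beta_{i-1}}{\beta_{j-1}(\kappa_j-\kappa_i)^2}\prod_{l\in I_k,l\ne i}\frac{\kappa_i-\kappa_l}{\kappa_j-\kappa_l}$ for $i\le k<j$. Then the matroid of $A$ (whose bases are the $k$-subsets $J\subset[n]$ with nonzero maximal minor $A_J$) is $\mathcal M_{\bar{\mathbf a},v_1}$.
   Context: $B\in\mathbb Z^{g\times n}$ has $B_{i,1}=1$, $B_{i,i+1}=-1$, other entries $0$; $Q=BB^T$. $\bar{\mathbf a}\in\mathbb R^g$ has its first $k-1$ entries equal to $\tfrac{g+1-k}{g+1}$ and the remaining $g+1-k$ entries equal to $-\tfrac{k}{g+1}$ (a vertex of the Voronoi polytope of $Q$). $\mathcal D_{\bar{\mathbf a},Q}=\{\mathbf c\in\mathbb Z^g:\bar{\mathbf a}^TQ\bar{\mathbf a}=(\bar{\mathbf a}-\mathbf c)^TQ(\bar{\mathbf a}-\mathbf c)\}$. $\mathbf s_{\bar{\mathbf a}}\in\{0,1\}^n$ has $j$-th entry $0$ if $(B^T\bar{\mathbf a})_j>0$ and $1$ if $(B^T\bar{\mathbf a})_j<0$. The matroid $\mathcal M_{\bar{\mathbf a},v_1}$ on $[n]$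 has bases $\{I\subset[n],|I|=k:\exists\mathbf c\in\mathcal D_{\bar{\mathbf a},Q}\text{ with }(B^T\mathbf c+\mathbf s_{\bar{\mathbf a}})_i=1\ \forall i\in I\}$. *)

(* Defs.v *)
From HB Require Import structures.
From Stdlib Require Rdefinitions.
From mathcomp Require Import Rstruct.
From mathcomp.real_closed Require Import complex.
From mathcomp Require Import all_boot all_order all_algebra.
Set Implicit Arguments. Unset Strict Implicit. Unset Printing Implicit Defensive.
Import Order.TTheory GRing.Theory Num.Theory.
Local Open Scope ring_scope.

Notation CC := (complex Rdefinitions.R).

(** Indices are 0-based: 'I_n = {0,...,n-1} stands for [n] = {1,...,n}
    (index j stands for j+1). Throughout n = g.+1. *)

Definition Bmx (g : nat) : 'M[int]_(g, g.+1) :=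
  \matrix_(i < g, j < g.+1)
    (if (j == 0 :> nat) then 1 else if (j == i.+1 :> nat) then -1 else 0).

Definition Bq (g : nat) : 'M[rat]_(g, g.+1) := map_mx (fun z : int => z%:~R) (Bmx g).

Definition Qmx (g : nat) : 'M[rat]_g := Bq g *m (Bq g)^T.

Definition qform (g : nat) (x : 'cV[rat]_g) : rat := (x^T *m Qmx g *m x) 0 0.

Definition abar (g k : nat) : 'cV[rat]_g :=
  \col_(i < g)
    (if (val i < k.-1)%N then ((g.+1 - k)%:R / g.+1%:R) else - (k%:R / g.+1%:R)).

Definition inD (g k : nat) (c : 'cV[int]_g) : Prop :=
  qform (abar g k) = qform (abar g k - map_mx (fun z : int => z%:~R) c).

Definition sabar (g k : nat) : 'cV[int]_(g.+1) :=
  \col_(j < g.+1)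
    (if (((Bq g)^T *m abar g k) j 0 < 0) then 1 else 0).

Definition M_basis (g k : nat) (I : {set 'I_g.+1}) : Prop :=
  #|I| = k /\
  exists c : 'cV[int]_g, inD k c /\
    forall i, i \in I -> ((Bmx g)^T *m c + sabar g k) i 0 = 1.

(** The matrix A (0-based: row i, column j; beta 0 = 1 plays beta_0). *)
Definition Amx (g k : nat) (kappa beta : 'I_g.+1 -> CC) : 'M[CC]_(k, g.+1) :=
  \matrix_(i < k, j < g.+1)
    (if (val j < k)%N then ((i == j :> nat)%:R)
     else
       let ki := kappa (inord i) in
       beta (inord i) / (beta j * (kappa j - ki) ^+ 2) *
       \prod_(l < k | l != i) ((ki - kappa (inord l)) / (kappa j - kappa (inord l)))).

(** maximal minor A_J of a k x n matrix: columns of J in increasing order. *)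
Definition minor (k n : nat) (A : 'M[CC]_(k, n.+1)) (J : {set 'I_n.+1}) : 'M[CC]_k :=
  colsub (fun i : 'I_k => nth ord0 (enum J) i) A.

Definition mx_basis (k n : nat) (A : 'M[CC]_(k, n.+1)) (J : {set 'I_n.+1}) : Prop :=
  #|J| = k /\ \det (minor A J) != 0.

(* Main.v *)
Require Import Defs.
From mathcomp Require Import Rstruct.
From mathcomp.real_closed Require Import complex.
From mathcomp Require Import all_boot all_order all_algebra.
From mathcomp Require Import ring zify.
Set Implicit Arguments. Unset Strict Implicit. Unset Printing Implicit Defensive.
Import Order.TTheory GRing.Theory Num.Theory.
Local Open Scope ring_scope.

Lemma sum_bool (V : zmodType) (n : nat) (S : {set 'I_n}) (h : bool -> V) :
  \sum_j h (j \in S) = h true *+ #|S| + h false *+ (n - #|S|).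
Proof.
transitivity (\sum_(j in S) h true + \sum_(j in ~: S) h false).
  rewrite (bigID (mem S)) /=; congr (_ + _).
    by apply: eq_big => [j|j ->] //.
  apply: eq_big => [j|j]; first by rewrite inE.
  by move=> Hj; rewrite (negbTE Hj).
rewrite !sumr_const; congr (_ + _); congr (_ *+ _).
have := cardsC S; rewrite card_ord => E; lia.
Qed.

Lemma BT_entry (R : nzRingType) g (M : 'M[R]_(g, g.+1)) (x : 'cV[R]_g)
  (f : 'I_g.+1 -> R) :
  (forall i j, M i j = if (val j == 0)%N then 1 else if (val j == i.+1)%N then -1 else 0) ->
  (forall i, - x i 0 = f (lift ord0 i)) -> \sum_j f j = 0 ->
  forall j, (M^T *m x) j 0 = f j.
Proof.
move=> HM hx hs j; rewrite mxE.
case: (unliftP ord0 j) => [i ->|->].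
  rewrite (bigD1 i) //= big1 ?addr0.
    by rewrite !mxE HM /= eqxx mulN1r; exact: (hx i).
  move=> l li; rewrite !mxE HM /=.
  have -> : (i.+1 == l.+1)%N = false by apply/negbTE; rewrite eqSS; rewrite eq_sym.
  by rewrite mul0r.
rewrite (eq_bigr (fun l => x l 0)); last by move=> l _; rewrite !mxE HM /= mul1r.
move: hs; rewrite big_ord_recl => /eqP; rewrite addr_eq0 => /eqP ->.
rewrite -sumrN; apply: eq_bigr => i _; by rewrite -hx opprK.
Qed.

Lemma Bmx_E g i j : Bmx g i j = if (val j == 0)%N then 1 else if (val j == i.+1)%N then -1 else 0.
Proof. by rewrite mxE. Qed.

Lemma Bq_E g i j : Bq g i j = if (val j == 0)%N then 1 else if (val j == i.+1)%N then -1 else 0.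
Proof. rewrite !mxE; case: ifP => _ //; case: ifP => _ //. Qed.

Lemma qformE g (x : 'cV[rat]_g) : qform x = \sum_j ((Bq g)^T *m x) j 0 ^+ 2.
Proof.
rewrite /qform.
have -> : x^T *m Qmx g *m x = ((Bq g)^T *m x)^T *m ((Bq g)^T *m x).
  by rewrite trmx_mul trmxK /Qmx !mulmxA.
rewrite mxE.
by apply: eq_bigr => j _; rewrite mxE expr2.
Qed.

Lemma cardK n k : (k <= n)%N -> #|[set j : 'I_n | (j < k)%N]| = k.
Proof.
move=> kn.
have -> : [set j : 'I_n | (j < k)%N] = [set widen_ord kn i | i : 'I_k].
  apply/setP => j; rewrite !inE; apply/idP/imsetP.
    by move=> jk; exists (Ordinal jk) => //; apply: val_inj.
  by case=> i _ ->; rewrite /= ltn_ord.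
by rewrite card_imset ?card_ord //; move=> a b /(congr1 val) /= ab; exact: val_inj.
Qed.

Lemma Mbasis_of_card g k (J : {set 'I_g.+1}) :
  (1 <= k <= g)%N -> #|J| = k -> M_basis k J.
Proof.
move=> /andP [k1 kg] cJ; split => //.
set K := [set j : 'I_g.+1 | (j < k)%N].
have cK : #|K| = k by rewrite cardK // ltnW.
set t : rat := k%:R / g.+1%:R.
have gn0 : g.+1%:R != 0 :> rat by rewrite pnatr_eq0.
have hsum (S : {set 'I_g.+1}) : #|S| = k -> \sum_j (t - (j \in S)%:R) = 0.
  move=> cS; rewrite (sum_bool S (fun b => t - b%:R)) cS.
  rewrite [true%:R]/= [false%:R]/= subr0 -mulr_natr -[t *+ _]mulr_natr (natrB _ (leqW kg)) /t; field; by rewrite addrC natr1.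
have hqf (x : 'cV[rat]_g) (Z : {set 'I_g.+1}) : #|Z| = k ->
    (forall i, - x i 0 = t - (lift ord0 i \in Z)%:R) ->
    qform x = (t - 1) ^+ 2 *+ k + t ^+ 2 *+ (g.+1 - k).
  move=> cZ hx; rewrite qformE.
  rewrite (eq_bigr (fun j => (t - (j \in Z)%:R) ^+ 2)); last first.
    by move=> j _; rewrite (BT_entry (@Bq_E g) hx (hsum Z cZ)).
  by rewrite (sum_bool Z (fun b => (t - b%:R) ^+ 2)) cZ subr0.
have habar i : - abar g k i 0 = t - (lift ord0 i \in K)%:R.
  rewrite !mxE inE /= /bump leq0n add1n.
  have -> : (i.+1 < k)%N = (i < k.-1)%N by case: (k) k1 => // k' _; rewrite ltnS.
  case: ifP => _ /=.
    rewrite (natrB _ (leqW kg)) /t; field; by rewrite addrC natr1.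
  by rewrite opprK subr0.
have hBa j : ((Bq g)^T *m abar g k) j 0 = t - (j \in K)%:R.
  exact: (BT_entry (@Bq_E g) habar (hsum K cK)).
have tpos : 0 < t by rewrite /t divr_gt0 // ltr0n.
have tlt1 : t < 1 by rewrite /t ltr_pdivrMr ?ltr0n // mul1r ltr_nat ltnS.
have hs j : sabar g k j 0 = (j \in K)%:R.
  rewrite mxE hBa; case: (j \in K) => /=.
    by rewrite subr_lt0 tlt1.
  by rewrite subr0 ltNge (ltW tpos).
pose c : 'cV[int]_g := \col_i ((lift ord0 i \in K)%:R - (lift ord0 i \in J)%:R).
exists c; split.
  rewrite /inD (hqf _ K cK habar) (hqf _ J cJ) // => i.
  have -> : (abar g k - map_mx (fun z : int => z%:~R) c) i 0 = abar g k i 0 - (c i 0)%:~R.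
    by rewrite !mxE.
  rewrite opprB addrC habar [c i 0]mxE rmorphB /= !rmorph_nat.
  by rewrite addrA subrK.
move=> i iJ.
rewrite mxE hs.
have hc : forall l, - c l 0 = (lift ord0 l \in J)%:R - (lift ord0 l \in K)%:R.
  by move=> l; rewrite mxE opprB.
have hcs : \sum_j ((j \in J)%:R - (j \in K)%:R : int) = 0.
  rewrite sumrB (sum_bool J (fun b => b%:R)) (sum_bool K (fun b => b%:R)) cJ cK.
  by rewrite subrr.
by rewrite (BT_entry (@Bmx_E g) hc hcs) iJ subrK.
Qed.

Definition alpha g k (kappa beta : 'I_g.+1 -> CC) (a : 'I_k) : CC :=
  beta (inord a) * \prod_(l < k | l != a) (kappa (inord a) - kappa (inord l)).
Definition bb g k (kappa beta : 'I_g.+1 -> CC) (j : 'I_g.+1) : CC :=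
  (beta j * \prod_(l < k) (kappa j - kappa (inord l)))^-1.

Lemma A_form g k kappa beta (a : 'I_k) (j : 'I_g.+1) :
  (k <= g)%N -> injective kappa -> (forall j, beta j != 0) -> (k <= j)%N ->
  Amx k kappa beta a j = alpha kappa beta a * bb k kappa beta j / (kappa j - kappa (inord a)).
Proof.
move=> kg kinj bnz kj.
have neq (l : 'I_k) : kappa j - kappa (inord l) != 0.
  rewrite subr_eq0; apply/eqP => /kinj /(congr1 (@nat_of_ord _)); rewrite inordK; last first.
    by apply: (leq_trans (ltn_ord l)); apply: leqW.
  move=> E; move: kj; rewrite E leqNgt ltn_ord //.
rewrite mxE ltnNge kj /= prodf_div /alpha /bb [\prod_(l < k) _](bigD1 a) //=.
have h1 := neq a.
have h2 : \prod_(l < k | l != a) (kappa j - kappa (inord l)) != 0.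
  by apply/prodf_neq0 => l _.
have h3 := bnz j.
field.
by rewrite h3 h1 h2.
Qed.

Lemma cauchy_lemma (F : fieldType) (m : nat) (P : {set 'I_m}) (y u : 'I_m -> F)
  (xs : seq F) :
  {in P &, injective y} -> uniq xs -> (#|P| <= size xs)%N ->
  (forall x, x \in xs -> forall p, p \in P -> x != y p) ->
  (forall x, x \in xs -> \sum_(p in P) u p / (y p - x) = 0) ->
  forall p, p \in P -> u p = 0.
Proof.
move=> yinj uxs sz xy hs.
set Q := \sum_(p in P) u p *: \prod_(q in P | q != p) ('X - (y q)%:P).
have hQ z : Q.[z] = \sum_(p in P) u p * \prod_(q in P | q != p) (z - y q).
  rewrite /Q horner_sum; apply: eq_bigr => p _.
  rewrite hornerZ horner_prod; congr (_ * _); apply: eq_bigr => q _.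
  by rewrite hornerXsubC.
have sQ : (size Q <= #|P|)%N.
  rewrite /Q; apply: (leq_trans (size_sum _ _ _)); apply/bigmax_leqP => p Pp.
  apply: (leq_trans (size_scale_leq _ _)).
  apply: (leq_trans (size_poly_prod_leq _ _)).
  rewrite (eq_bigr (fun=> 2%N)); last by move=> q _; rewrite size_XsubC.
  rewrite sum_nat_const.
  have -> : #|[pred q | (q \in P) && (q != p)]| = #|P|.-1.
    rewrite (cardD1 p P) Pp /=; apply: eq_card => q; rewrite !inE andbC.
    by [].
  have : (0 < #|P|)%N by apply/card_gt0P; exists p.
  lia.
have Q0 : Q = 0.
  apply/eqP; apply: contraT => nz.
  have := max_poly_roots nz _ uxs.
  have -> : all (root Q) xs.
    apply/allP => x xin; apply/rootP; rewrite hQ.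
    have ->: \sum_(p in P) u p * \prod_(q in P | q != p) (x - y q) =
      - (\prod_(q in P) (x - y q)) * \sum_(p in P) u p / (y p - x).
      rewrite mulr_sumr; apply: eq_bigr => p Pp.
      rewrite (bigD1 p Pp) /=.
      have : y p - x != 0 by rewrite subr_eq0 eq_sym xy.
      move=> h; field. by [].
    by rewrite hs // mulr0.
  move=> /(_ isT) lt; have := leq_trans lt (leq_trans sQ sz).
  by rewrite ltnn.
move=> p Pp.
have : Q.[y p] = 0 by rewrite Q0 horner0.
rewrite hQ [\sum_(p0 in P) _](bigD1 p Pp) /=.
have -> : \sum_(i in P | i != p) u i * \prod_(q in P | q != i) (y p - y q) = 0.
  apply: big1 => q /andP [Pq qp].
  by rewrite (bigD1 p) /= ?subrr ?mul0r ?mulr0 // Pp eq_sym.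
rewrite addr0 => /eqP; rewrite mulf_eq0 => /orP [/eqP //|].
rewrite prodf_seq_eq0 => /hasP [q _ /andP [/andP [Pq qp]]].
by rewrite subr_eq0 => /eqP /yinj => /(_ Pp Pq) E; rewrite E eqxx in qp.
Qed.

Lemma inordV n (a : nat) : (a < n.+1)%N -> \val (inord a : 'I_n.+1) = a.
Proof. exact: inordK. Qed.

Lemma det_nz g k (kappa beta : 'I_g.+1 -> CC) (J : {set 'I_g.+1}) :
  (1 <= k <= g)%N -> injective kappa -> (forall j, beta j != 0) -> #|J| = k ->
  \det (minor (Amx k kappa beta) J) != 0.
Proof.
move=> /andP [k1 kg] kinj bnz cJ.
set A := Amx k kappa beta.
pose col := fun p : 'I_k => nth ord0 (enum J) p.
have szJ : size (enum J) = k by rewrite -cardE.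
have colJ p : col p \in J by rewrite -mem_enum mem_nth // szJ.
have colinj : injective col.
  move=> p q /eqP; rewrite nth_uniq ?szJ ?enum_uniq // => /eqP; exact: val_inj.
have colsurj j : j \in J -> exists p, col p = j.
  move=> jJ; have hi : (index j (enum J) < k)%N by rewrite -szJ index_mem mem_enum.
  by exists (Ordinal hi); rewrite /col nth_index // mem_enum.
have ltg (a : 'I_k) : (a < g.+1)%N by apply: (leq_trans (ltn_ord a)); apply: leqW.
rewrite -det_tr; apply/negP => /det0P [v vnz hv].
move/negP: vnz; apply; apply/eqP/rowP => p; rewrite [RHS]mxE.
have heq (a : 'I_k) : \sum_p v 0 p * A a (col p) = 0.
  transitivity ((v *m (minor A J)^T) 0 a); last by rewrite hv mxE.
  by rewrite mxE; apply: eq_bigr => q _; rewrite !mxE.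
set P2 := [set p : 'I_k | (k <= col p)%N].
set R := [set a : 'I_k | (inord a : 'I_g.+1) \notin J].
have AP1 a q : q \notin P2 -> a \in R -> A a (col q) = 0.
  rewrite !inE -ltnNge => cq aR; rewrite mxE cq.
  case: eqP => //= E; exfalso; move/negP: aR; apply.
  suff -> : (inord a : 'I_g.+1) = col q by [].
  by apply: val_inj; rewrite /= inordV // E.
have cnt : (#|P2| <= #|R|)%N.
  have c1 := cardsC P2; have c2 := cardsC R; rewrite card_ord in c1 c2.
  suff : (#|~: R| <= #|~: P2|)%N by lia.
  pose a0 : 'I_k := Ordinal k1.
  pose h p : 'I_k := insubd a0 (val (col p)).
  apply: (leq_trans _ (leq_imset_card h _)); apply: subset_leq_card.
  apply/subsetP => a; rewrite !inE negbK => aJ.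
  have [q cq] := colsurj _ aJ.
  apply/imsetP; exists q.
    by rewrite !inE -ltnNge cq inordV.
  by apply: val_inj; rewrite val_insubd cq inordV ?ltn_ord.
have v2 q : q \in P2 -> v 0 q = 0.
  pose u p := v 0 p * bb k kappa beta (col p).
  pose xs := [seq kappa (inord a) | a : 'I_k <- enum R].
  have bnz' (j : 'I_g.+1) : (k <= j)%N -> bb k kappa beta j != 0.
    move=> kj; rewrite /bb invr_eq0 mulf_eq0 negb_or bnz /=.
    apply/prodf_neq0 => l _; rewrite subr_eq0; apply/eqP => /kinj /(congr1 val).
    rewrite inordV // => E; move: kj; rewrite E leqNgt ltn_ord //.
  have anz (a : 'I_k) : alpha kappa beta a != 0.
    rewrite /alpha mulf_eq0 negb_or bnz /=.
    apply/prodf_neq0 => l la; rewrite subr_eq0; apply/eqP => /kinj /(congr1 val).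
    rewrite !inordV // => E; move/eqP: la; apply; exact: val_inj.
  suff H : forall pp, pp \in P2 -> u pp = 0.
    move=> qP; move: (H q qP); rewrite /u => /eqP; rewrite mulf_eq0 => /orP [/eqP //|].
    by rewrite (negbTE (bnz' _ _)) //; move: qP; rewrite inE.
  apply: (@cauchy_lemma _ _ P2 (fun p => kappa (col p)) u xs).
  - by move=> p1 p2 _ _ /kinj; apply: colinj.
  - rewrite map_inj_in_uniq ?enum_uniq // => a b _ _ /kinj /(congr1 val).
    by rewrite !inordV // => ab; apply: val_inj.
  - by rewrite size_map -cardE.
  - move=> x /mapP [a _ ->] pp; rewrite inE => kp.
    apply/eqP => /kinj /(congr1 val); rewrite inordV // => E.
    by move: kp; rewrite -E leqNgt ltn_ord.
  - move=> x /mapP [a aR ->]; rewrite mem_enum in aR.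
    have := heq a; rewrite (bigID (mem P2)) /=.
    rewrite [X in _ + X]big1 ?addr0; last by move=> pp pn; rewrite AP1 ?mulr0.
    move=> E.
    have : alpha kappa beta a * \sum_(p in P2) u p / (kappa (col p) - kappa (inord a)) = 0.
      rewrite -[RHS]E mulr_sumr; apply: eq_big => [pp|pp] //.
      move=> Pp; rewrite A_form //; last by move: Pp; rewrite inE.
      by rewrite /u; ring.
    by move/eqP; rewrite mulf_eq0 (negbTE (anz a)) /= => /eqP.
have v1 q : q \notin P2 -> v 0 q = 0.
  rewrite inE -ltnNge => cqk.
  pose a : 'I_k := Ordinal cqk.
  have := heq a; rewrite (bigD1 q) //= big1 ?addr0.
    by rewrite /A mxE cqk eqxx mulr1.
  move=> r rq; case: (boolP (r \in P2)) => [/v2 -> |rn]; first by rewrite mul0r.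
  move: rn; rewrite inE -ltnNge => crk.
  rewrite /A mxE crk /=.
  have -> : (nat_of_ord (col q) == nat_of_ord (col r)) = false.
    apply/negbTE; apply: contra rq => /eqP E.
    by apply/eqP; apply: colinj; apply: val_inj.
  by rewrite mulr0.
by case: (boolP (p \in P2)) => [/v2|/v1].
Qed.

Theorem corollary5p4 (g k : nat) (kappa beta : 'I_g.+1 -> CC) :
  (1 <= g)%N -> (1 <= k <= g)%N ->
  injective kappa ->
  beta ord0 = 1 ->
  (forall j, beta j != 0) ->
  forall J : {set 'I_g.+1}, mx_basis (Amx k kappa beta) J <-> M_basis k J.
Proof.
move=> g1 kk kinj b0 bnz J; split.
  by case=> cJ _; exact: Mbasis_of_card.
case=> cJ _; split => //.
exact: det_nz.
Qed.
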